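(* For any $\lambda, \gamma \geq 1$, there is a polynomial time FPT reduction from $\textsc{GapD}k\textsc{S}(2\lambda\gamma^2)$ to $\textsc{GapD}k\textsc{S}(\lambda, \gamma)$.
   Context: Graphs are finite, simple, undirected. For a graph $G$ let $\mathrm{edge}_{=k}(G) = \max_{S \subseteq V_G, |S| = k} |E_{G[S]}|$ and $\mathrm{edge}_{\leq r}(G) = \max_{S \subseteq V_G, |S| \leq r} |E_{G[S]}|$ (for real $r$). For $\lambda \geq 1$, $\textsc{GapD}k\textsc{S}(\lambda)$: given a graph $G$ and $k, \ell \in \mathbb{N}$, distinguish between (Completeness) $\mathrm{edge}_{=k}(G) \geq \ell$ and (Soundness) $\mathrm{edge}_{=k}(G) < \ell/\lambda$. For $\lambda, \gamma \geq 1$, $\textsc{GapD}k\textsc{S}(\lambda, \gamma)$: given a graph $G$ and $k, \ell \in \mathbb{N}$, distinguish between (Completeness) $\mathrm{edge}_{\leq k}(G) \geq \ell$ and (Soundness) $\mathrm{edge}_{\leq \gamma \cdot k}(G) < \ell/\lambda$. A polynomial time FPT reduction from promise problem $A$ to promise problem $B$ (both with parameter $k$) is a polynomial time map from instances of $A$ to instances of $B$ sending completeness instances to completeness instances and soundness instances to soundness instances, such that the parameter of the output is bounded by a function of the input parameter alone. *)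

(* Defs.v *)
From HB Require Import structures.
From mathcomp Require Import all_boot all_order all_algebra.
From mathcomp Require Import reals.
Set Implicit Arguments. Unset Strict Implicit. Unset Printing Implicit Defensive.
Import Order.TTheory GRing.Theory Num.Theory.

Record inst := Inst {
  inst_n : nat;
  inst_E : seq (nat * nat);
  inst_k : nat;
  inst_l : nat }.

Definition adj (I : inst) (u v : 'I_(inst_n I)) : bool :=
  (u != v) && (((val u, val v) \in inst_E I) || ((val v, val u) \in inst_E I)).

Definition edges_in (I : inst) (S : {set 'I_(inst_n I)}) : nat :=
  #|[set p : 'I_(inst_n I) * 'I_(inst_n I) |
      [&& (p.1 < p.2)%N, p.1 \in S, p.2 \in S & @adj I p.1 p.2]]|.

(* edge_{=k}(G)  (0 if there is no k-subset) *)
Definition edge_eq (I : inst) (k : nat) : nat :=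
  \max_(S : {set 'I_(inst_n I)} | #|S| == k) @edges_in I S.

Definition edge_le (R : realType) (I : inst) (r : R) : nat :=
  \max_(S : {set 'I_(inst_n I)} | (#|S|%:R <= r)%R) @edges_in I S.

Local Open Scope ring_scope.

Definition gap1_yes (I : inst) : Prop := (inst_l I <= edge_eq I (inst_k I))%N.
Definition gap1_no (R : realType) (lam : R) (I : inst) : Prop :=
  (edge_eq I (inst_k I))%:R < (inst_l I)%:R / lam.

Definition gap2_yes (R : realType) (I : inst) : Prop :=
  (inst_l I <= edge_le I ((inst_k I)%:R : R))%N.
Definition gap2_no (R : realType) (lam gam : R) (I : inst) : Prop :=
  (edge_le I (gam * (inst_k I)%:R))%:R < (inst_l I)%:R / lam.

Local Close Scope ring_scope.

(* Binary encoding of instances (self-delimiting).                     *)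
Fixpoint bin (fuel n : nat) : seq bool :=
  match fuel with
  | 0 => [::]
  | f.+1 => if n == 0 then [::] else odd n :: bin f n./2
  end.
Definition bits (n : nat) : seq bool := bin n n.   (* LSB first *)

Definition enc_nat (n : nat) : seq bool :=
  flatten [seq [:: true; b] | b <- bits n] ++ [:: false].

Definition enc_edges (E : seq (nat * nat)) : seq bool :=
  flatten [seq true :: enc_nat p.1 ++ enc_nat p.2 | p <- E] ++ [:: false].

Definition enc (I : inst) : seq bool :=
  enc_nat (inst_n I) ++ enc_nat (inst_k I) ++ enc_nat (inst_l I)
    ++ enc_edges (inst_E I).

(* States are 'I_Q.+1 (finitely many); start = ord0, halt = ord_max.   *)
Inductive move := MLeft | MRight | MStay.

Record TM := MkTM {
  tm_Q : nat;
  tm_delta : 'I_tm_Q.+1 -> option bool -> 'I_tm_Q.+1 * option bool * move }.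

(* configuration: state, tape left of head (nearest first), head cell,
   tape right of head; unlisted cells are blank (None). *)
Record config (Q : nat) := Conf {
  c_st : 'I_Q.+1;
  c_left : seq (option bool);
  c_head : option bool;
  c_right : seq (option bool) }.

Definition step (M : TM) (c : config (tm_Q M)) : config (tm_Q M) :=
  if c_st c == ord_max then c else
  let: (q', w, m) := tm_delta (c_st c) (c_head c) in
  match m with
  | MStay => Conf q' (c_left c) w (c_right c)
  | MLeft => match c_left c with
             | [::] => Conf q' [::] None (w :: c_right c)
             | a :: l => Conf q' l a (w :: c_right c)
             end
  | MRight => match c_right c with
              | [::] => Conf q' (w :: c_left c) None [::]
              | a :: r => Conf q' (w :: c_left c) a r
              end
  end.

Definition run (M : TM) (t : nat) (c : config (tm_Q M)) : config (tm_Q M) :=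
  iter t (step (M := M)) c.

Definition init (M : TM) (x : seq bool) : config (tm_Q M) :=
  match x with
  | [::] => Conf ord0 [::] None [::]
  | b :: x' => Conf ord0 [::] (Some b) (map Some x')
  end.

Fixpoint read_out (s : seq (option bool)) : seq bool :=
  match s with
  | Some b :: s' => b :: read_out s'
  | _ => [::]
  end.
Definition output (M : TM) (c : config (tm_Q M)) : seq bool :=
  read_out (c_head c :: c_right c).

Definition halted (M : TM) (c : config (tm_Q M)) : bool := c_st c == ord_max.

Definition poly_fpt_reduction (yesA noA yesB noB : inst -> Prop) : Prop :=
  exists (M : TM) (c : nat) (g : nat -> nat),
    forall I : inst,
      exists t : nat,
        (t <= c * (size (enc I)) ^ c + c)%N /\
        halted (run t (init M (enc I))) /\
        exists I' : inst,
          output (run t (init M (enc I))) = enc I' /\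
          (inst_k I' <= g (inst_k I))%N /\
          (yesA I -> yesB I') /\
          (noA I -> noB I').

(* Main.v *)
Require Import Defs.
From HB Require Import structures.
From mathcomp Require Import all_boot all_order all_algebra.
From mathcomp Require Import reals.
From mathcomp Require Import zify ring lra.
Import Order.TTheory GRing.Theory Num.Theory.
Set Implicit Arguments. Unset Strict Implicit. Unset Printing Implicit Defensive.

Inductive cmpT := CLt | CEq | CGt.

Inductive St :=
| START | GO | P0 | P0b | K0 | K1 | K2 | X2 | X1 | X0 | RB | RF
| SKb | SKf | LCHK | Wy1 | Wy2 | Wy3 | Wy4 | Wy5 | Wn1 | Wn2 | Wn3 | Wn4 | Wn5
| WEnd | Bk1 | Bk2 | Bk3 | Bk4 | Bk5 | RKb | RKf | RKamb | RNf | RNb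
| SA of cmpT | SA' of cmpT | DX of cmpT | DX' of cmpT | LKf of cmpT | LKb of cmpT
| LKamb of cmpT | LNf of cmpT | LNb of cmpT | SB of cmpT
| SC of cmpT & bool | SC' of cmpT & bool | SD of cmpT & bool | SD' of cmpT & bool
| SE of cmpT & bool
| HALT.

Definition ci c := match c with CLt => 0 | CEq => 1 | CGt => 2 end.

Definition num (s : St) : nat :=
  match s with
  | START => 0 | GO => 1 | P0 => 2 | P0b => 3 | K0 => 4 | K1 => 5 | K2 => 6
  | X2 => 7 | X1 => 8 | X0 => 9 | RB => 10 | RF => 11 | SKb => 12 | SKf => 13
  | LCHK => 14 | Wy1 => 15 | Wy2 => 16 | Wy3 => 17 | Wy4 => 18 | Wy5 => 19
  | Wn1 => 20 | Wn2 => 21 | Wn3 => 22 | Wn4 => 23 | Wn5 => 24 | WEnd => 25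
  | Bk1 => 26 | Bk2 => 27 | Bk3 => 28 | Bk4 => 29 | Bk5 => 30
  | RKb => 31 | RKf => 32 | RKamb => 33 | RNf => 34 | RNb => 35
  | SA c => 36 + ci c | SA' c => 39 + ci c | DX c => 42 + ci c | DX' c => 45 + ci c
  | LKf c => 48 + ci c | LKb c => 51 + ci c | LKamb c => 54 + ci c
  | LNf c => 57 + ci c | LNb c => 60 + ci c | SB c => 63 + ci c
  | SC c x => 66 + ci c + 3 * x | SC' c x => 72 + ci c + 3 * x
  | SD c x => 78 + ci c + 3 * x | SD' c x => 84 + ci c + 3 * x
  | SE c x => 90 + ci c + 3 * x
  | HALT => 96
  end.

Definition cs3 (f : cmpT -> St) := [:: f CLt; f CEq; f CGt].
Definition cs6 (f : cmpT -> bool -> St) :=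
  [:: f CLt false; f CEq false; f CGt false; f CLt true; f CEq true; f CGt true].

Definition all_states : seq St :=
  [:: START; GO; P0; P0b; K0; K1; K2; X2; X1; X0; RB; RF; SKb; SKf; LCHK;
      Wy1; Wy2; Wy3; Wy4; Wy5; Wn1; Wn2; Wn3; Wn4; Wn5; WEnd;
      Bk1; Bk2; Bk3; Bk4; Bk5; RKb; RKf; RKamb; RNf; RNb]
  ++ cs3 SA ++ cs3 SA' ++ cs3 DX ++ cs3 DX' ++ cs3 LKf ++ cs3 LKb ++ cs3 LKamb
  ++ cs3 LNf ++ cs3 LNb ++ cs3 SB
  ++ cs6 SC ++ cs6 SC' ++ cs6 SD ++ cs6 SD' ++ cs6 SE ++ [:: HALT].

Lemma numK s : nth HALT all_states (num s) = s.
Proof. case: s; try (case; try case); done. Qed.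

Lemma num_le s : num s <= 96.
Proof. case: s; try (case; try case); done. Qed.

Lemma num_lt s : s <> HALT -> num s < 96.
Proof.
move=> H; rewrite ltn_neqAle num_le andbT; apply/eqP=> E; apply: H.
by rewrite -(numK s) E.
Qed.

Definition upd (c : cmpT) (x y : bool) :=
  if x && ~~ y then CGt else if ~~ x && y then CLt else c.

Definition dst (s : St) (h : option bool) : St * option bool * move :=
  match s, h with
  | START, _ => (GO, h, MLeft)
  | GO, _ => (P0, h, MRight)
  | P0, Some true => (P0b, h, MRight)
  | P0, Some false => (K0, h, MRight)
  | P0b, _ => (P0, h, MRight)
  | K0, Some false => (LCHK, h, MRight)
  | K0, Some true => (K1, h, MRight)
  | K1, Some false => (X1, h, MLeft)
  | K1, Some true => (K2, h, MRight)
  | K2, Some false => (LCHK, h, MRight)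
  | K2, Some true => (X2, h, MLeft)
  | X2, _ => (X1, h, MLeft)
  | X1, _ => (RF, h, MLeft)
  | X0, _ => (RB, h, MLeft)
  | RB, None => (SA CEq, h, MRight)
  | RB, Some _ => (RF, h, MLeft)
  | RF, _ => (RB, h, MLeft)
  | SA c, Some true => (SB c, None, MRight)
  | SA c, Some false => (DX c, h, MRight)
  | SB c, Some x => (SC c x, h, MRight)
  | SC c x, Some true => (SC' c x, h, MRight)
  | SC c x, Some false => (SD c x, h, MRight)
  | SC' c x, _ => (SC c x, h, MRight)
  | SD c x, None => (SD' c x, h, MRight)
  | SD c x, Some true => (SE c x, None, MRight)
  | SD c x, Some false => (RKb, h, MLeft)
  | SD' c x, _ => (SD c x, h, MRight)
  | SE c x, Some y => (LKf (upd c x y), h, MLeft)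
  | LKf c, _ => (LKb c, h, MLeft)
  | LKb c, Some true => (LKf c, h, MLeft)
  | LKb c, Some false => (LKamb c, h, MLeft)
  | LKamb c, None => (LKb c, h, MLeft)
  | LKamb c, Some _ => (LNf c, h, MLeft)
  | LNf c, None => (SA' c, h, MRight)
  | LNf c, Some _ => (LNb c, h, MLeft)
  | LNb c, _ => (LNf c, h, MLeft)
  | SA' c, _ => (SA c, h, MRight)
  | DX c, None => (DX' c, h, MRight)
  | DX' c, _ => (DX c, h, MRight)
  | DX c, Some true => (SKb, h, MRight)
  | DX c, Some false => (if c is CLt then LCHK else RKb, h, if c is CLt then MRight else MLeft)
  | SKb, _ => (SKf, h, MRight)
  | SKf, Some true => (SKb, h, MRight)
  | SKf, Some false => (LCHK, h, MRight)
  | LCHK, Some false => (Wy1, Some true, MRight)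
  | LCHK, _ => (Wn1, Some false, MRight)
  | Wy1, _ => (Wy2, Some true, MRight)
  | Wy2, _ => (Wy3, Some false, MRight)
  | Wy3, _ => (Wy4, Some false, MRight)
  | Wy4, _ => (Wy5, Some false, MRight)
  | Wy5, _ => (WEnd, Some false, MRight)
  | Wn1, _ => (Wn2, Some false, MRight)
  | Wn2, _ => (Wn3, Some true, MRight)
  | Wn3, _ => (Wn4, Some true, MRight)
  | Wn4, _ => (Wn5, Some false, MRight)
  | Wn5, _ => (WEnd, Some false, MRight)
  | WEnd, _ => (Bk5, None, MLeft)
  | Bk5, _ => (Bk4, h, MLeft)
  | Bk4, _ => (Bk3, h, MLeft)
  | Bk3, _ => (Bk2, h, MLeft)
  | Bk2, _ => (Bk1, h, MLeft)
  | Bk1, _ => (HALT, h, MLeft)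
  | RKb, Some true => (RKf, h, MLeft)
  | RKb, Some false => (RKamb, h, MLeft)
  | RKf, _ => (RKb, Some true, MLeft)
  | RKamb, None => (RKb, Some true, MLeft)
  | RKamb, Some _ => (RNf, h, MLeft)
  | RNf, _ => (RNb, Some true, MLeft)
  | RNb, Some _ => (RNf, h, MLeft)
  | RNb, None => (HALT, h, MRight)
  | _, _ => (HALT, h, MStay)
  end.

Definition ost (s : St) : 'I_97 := inord (num s).
Definition dec (q : 'I_97) : St := nth HALT all_states q.

Definition delta (q : 'I_97) (h : option bool) : 'I_97 * option bool * move :=
  let: (s', w, m) := dst (dec q) h in (ost s', w, m).

Definition Mred : TM := @MkTM 96 delta.


Definition cfg (s : St) (A B : seq (option bool)) : config (tm_Q Mred) :=
  @Conf 96 (ost s) (rev A) (head None B) (behead B).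

Lemma ostK s : dec (ost s) = s.
Proof. by rewrite /dec /ost inordK ?numK // ltnS num_le. Qed.

Lemma ost_max s : s <> HALT -> (ost s == ord_max) = false.
Proof.
move=> H; apply/negbTE; rewrite -val_eqE /= /ost inordK ?ltnS ?num_le //.
by rewrite neq_ltn num_lt.
Qed.

Lemma stepR s A B s' w : s <> HALT -> dst s (head None B) = (s', w, MRight) ->
  step (M:=Mred) (cfg s A B) = cfg s' (rcons A w) (behead B).
Proof.
move=> Hs Hd; rewrite /step /= ost_max // /= /delta ostK Hd /=.
by rewrite /cfg rev_rcons; case: (behead B).
Qed.

Lemma stepL s A x B s' w : s <> HALT -> dst s (head None B) = (s', w, MLeft) ->
  step (M:=Mred) (cfg s (rcons A x) B) = cfg s' A (x :: w :: behead B).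
Proof.
move=> Hs Hd; rewrite /step /= ost_max // /= /delta ostK Hd /=.
by rewrite /cfg rev_rcons.
Qed.

Lemma stepL0 s B s' w : s <> HALT -> dst s (head None B) = (s', w, MLeft) ->
  step (M:=Mred) (cfg s [::] B) = cfg s' [::] (None :: w :: behead B).
Proof.
move=> Hs Hd; rewrite /step /= ost_max // /= /delta ostK Hd /=.
by rewrite /cfg.
Qed.

Lemma init_cfg x : init Mred x = cfg START [::] (map Some x).
Proof.
rewrite /cfg; have -> : ost START = ord0 by apply/val_inj; rewrite /= /ost inordK.
by case: x.
Qed.

Section Fin.
Variable out : seq bool.

Definition Fin (c : config (tm_Q Mred)) (N : nat) :=
  exists t, t <= N /\ halted (run t c) /\ output (run t c) = out.

Lemma FinS c N : Fin (step c) N -> Fin c N.+1.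
Proof.
by case=> t [Ht H]; exists t.+1; rewrite ltnS Ht /run iterSr.
Qed.

Lemma FinRun k c c' N : run k c = c' -> Fin c' N -> Fin c (k + N).
Proof.
move=> E [t [Ht H]]; exists (t + k); split; first by rewrite addnC leq_add2l.
by move: H E; rewrite /run iterD => H ->.
Qed.

Lemma Fin_le c N N' : N <= N' -> Fin c N -> Fin c N'.
Proof. by move=> le [t [Ht H]]; exists t; rewrite (leq_trans Ht). Qed.

Lemma Fin_halt c : halted c -> output c = out -> Fin c 0.
Proof. by move=> H1 H2; exists 0. Qed.

Lemma FinR s A B s' w N : s <> HALT -> dst s (head None B) = (s', w, MRight) ->
  Fin (cfg s' (rcons A w) (behead B)) N -> Fin (cfg s A B) N.+1.
Proof. by move=> H1 H2 H; apply: FinS; rewrite (stepR _ H1 H2). Qed.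

Lemma FinL s A x B s' w N : s <> HALT -> dst s (head None B) = (s', w, MLeft) ->
  Fin (cfg s' A (x :: w :: behead B)) N -> Fin (cfg s (rcons A x) B) N.+1.
Proof. by move=> H1 H2 H; apply: FinS; rewrite (stepL _ _ H1 H2). Qed.

Lemma FinL0 s B s' w N : s <> HALT -> dst s (head None B) = (s', w, MLeft) ->
  Fin (cfg s' [::] (None :: w :: behead B)) N -> Fin (cfg s [::] B) N.+1.
Proof. by move=> H1 H2 H; apply: FinS; rewrite (stepL0 H1 H2). Qed.
End Fin.

Lemma runS c k : run (M:=Mred) k.+1 c = run k (step c).
Proof. by rewrite /run iterSr. Qed.

Lemma runD c k1 k2 : run (M:=Mred) (k1 + k2) c = run k2 (run k1 c).
Proof. by rewrite /run addnC iterD. Qed.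

Lemma stepRc s A h B s' w : s <> HALT -> dst s h = (s', w, MRight) ->
  step (M:=Mred) (cfg s A (h :: B)) = cfg s' (rcons A w) B.
Proof. by move=> H1 H2; rewrite (@stepR s A (h :: B) s' w H1 H2). Qed.

Lemma stepLc s A x h B s' w : s <> HALT -> dst s h = (s', w, MLeft) ->
  step (M:=Mred) (cfg s (rcons A x) (h :: B)) = cfg s' A (x :: w :: B).
Proof. by move=> H1 H2; rewrite (@stepL s A x (h :: B) s' w H1 H2). Qed.

Lemma FinRc out s A h B s' w N : s <> HALT -> dst s h = (s', w, MRight) ->
  Fin out (cfg s' (rcons A w) B) N -> Fin out (cfg s A (h :: B)) N.+1.
Proof. by move=> H1 H2 H; apply: FinS; rewrite (stepRc _ _ H1 H2). Qed.

Lemma FinLc out s A x h B s' w N : s <> HALT -> dst s h = (s', w, MLeft) ->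
  Fin out (cfg s' A (x :: w :: B)) N -> Fin out (cfg s (rcons A x) (h :: B)) N.+1.
Proof. by move=> H1 H2 H; apply: FinS; rewrite (stepLc _ _ _ H1 H2). Qed.

Fixpoint regf (ps : seq (option bool * bool)) : seq (option bool) :=
  if ps is p :: ps' then p.1 :: Some p.2 :: regf ps' else [::].
Definition reg (fl : option bool) (s : seq bool) := regf [seq (fl, x) | x <- s].

Lemma regf_cat p1 p2 : regf (p1 ++ p2) = regf p1 ++ regf p2.
Proof. by elim: p1 => //= p p1 ->. Qed.

Lemma reg_cat fl s1 s2 : reg fl (s1 ++ s2) = reg fl s1 ++ reg fl s2.
Proof. by rewrite /reg map_cat regf_cat. Qed.

Lemma reg_cons fl x s : reg fl (x :: s) = fl :: Some x :: reg fl s.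
Proof. by []. Qed.

Lemma reg_rcons fl s x : reg fl (rcons s x) = reg fl s ++ [:: fl; Some x].
Proof. by rewrite -cats1 reg_cat. Qed.

Lemma reg_nil fl : reg fl [::] = [::].
Proof. by []. Qed.

Lemma size_reg fl s : size (reg fl s) = 2 * size s.
Proof. by elim: s => //= x s; rewrite /reg /= => ->; lia. Qed.

Lemma runR F G fl s A B : F <> HALT -> G <> HALT ->
  dst F fl = (G, fl, MRight) -> (forall x, dst G (Some x) = (F, Some x, MRight)) ->
  run (M:=Mred) (2 * size s) (cfg F A (reg fl s ++ B)) = cfg F (A ++ reg fl s) B.
Proof.
move=> HF HG D1 D2; elim: s A => [|x s IH] A; first by rewrite /= cats0.
have -> : 2 * size (x :: s) = (2 * size s).+2 by rewrite /=; lia.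
rewrite reg_cons !cat_cons !runS (stepRc _ _ HF D1) (stepRc _ _ HG (D2 x)) IH.
by rewrite -!cats1 -!catA.
Qed.

Lemma runL Fb (g : bool -> St) wf (ps : seq (option bool * bool)) : Fb <> HALT -> (forall x, g x <> HALT) ->
  (forall x, dst Fb (Some x) = (g x, Some x, MLeft)) ->
  (forall p, p \in ps -> dst (g p.2) p.1 = (Fb, wf, MLeft)) ->
  forall F h w A la B, F <> HALT -> dst F h = (Fb, w, MLeft) ->
  run (M:=Mred) (2 * size ps).+1 (cfg F (rcons A la ++ regf ps) (h :: B)) =
  cfg Fb A (la :: reg wf (map snd ps) ++ w :: B).
Proof.
move=> HFb Hg D1; elim/last_ind: ps => [|ps p IH] D2 F h w A la B HF DF.
  by rewrite cats0 runS (stepLc _ _ _ HF DF).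
have -> : (2 * size (rcons ps p)).+1 = ((2 * size ps).+1).+2 by rewrite size_rcons; lia.
have E1 : rcons A la ++ regf (rcons ps p) =
   rcons (rcons (rcons A la ++ regf ps) p.1) (Some p.2).
  by rewrite -(cats1 ps) regf_cat /= -!cats1 -!catA.
rewrite 2!runS E1 (stepLc _ _ _ HF DF) (stepLc _ _ _ HFb (D1 p.2)).
have D2' : forall q, q \in ps -> dst (g q.2) q.1 = (Fb, wf, MLeft).
  by move=> q Hq; apply: D2; rewrite mem_rcons in_cons Hq orbT.
have Dp : dst (g p.2) p.1 = (Fb, wf, MLeft) by apply: D2; rewrite mem_rcons mem_head.
rewrite (IH D2' (g p.2) p.1 wf A la _ (Hg _) Dp).
by rewrite map_rcons reg_rcons -catA.
Qed.

Definition bval (s : seq bool) : nat := foldr (fun (b : bool) acc => b + acc.*2) 0 s.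
Definition can (s : seq bool) : bool := (s == [::]) || last false s.

Lemma bin0 f : bin f 0 = [::].
Proof. by case: f. Qed.

Lemma bin_ok f n : n <= f -> bval (bin f n) = n /\ can (bin f n).
Proof.
elim: f n => [|f IH] n Hn.
  by move: Hn; rewrite leqn0 => /eqP ->.
rewrite /=; case: eqP => [->|/eqP Hn0] //.
have Hh : n./2 <= f.
  by rewrite leq_half_double; apply: leq_trans Hn _; rewrite ltnS -addnn leq_addr.
case: (IH _ Hh) => V C; split; first by rewrite /= V odd_double_half.
move: C V; rewrite /can /=.
case E: (bin f n./2) => [|y t] /= C V.
  have := odd_double_half n; rewrite -V /= addn0 => Hn'.
  by move: Hn0; rewrite -Hn'; case: (odd n).
by move: C.
Qed.

Lemma bits_val n : bval (bits n) = n.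
Proof. by case: (bin_ok (leqnn n)). Qed.

Lemma bits_can n : can (bits n).
Proof. by case: (bin_ok (leqnn n)). Qed.

Lemma val_small s : bval s < 2 ^ size s.
Proof. elim: s => //= b s IH; rewrite expnS; case: b => /=; lia. Qed.

Lemma val_rcons s b : bval (rcons s b) = bval s + b * 2 ^ size s.
Proof. elim: s => [|x s IH] /=; first by case: b. rewrite IH expnS; lia. Qed.

Lemma can_big s : can s -> s != [::] -> 2 ^ (size s).-1 <= bval s.
Proof.
case/lastP: s => // s b; rewrite /can size_rcons last_rcons /=.
have -> : (rcons s b == [::]) = false by case: s.
move=> /= Hb _.
by rewrite val_rcons Hb mul1n leq_addl.
Qed.

Lemma lt_size s1 s2 : can s2 -> size s1 < size s2 -> bval s1 < bval s2.
Proof.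
move=> C2 Hs; have Hn : s2 != [::] by case: s2 Hs C2.
apply: (leq_trans (val_small s1)); apply: leq_trans (can_big C2 Hn).
by rewrite leq_exp2l //; case: (size s2) Hs.
Qed.

Definition cmpn (x y : nat) : cmpT := if x < y then CLt else if x == y then CEq else CGt.

Definition cfold (s1 s2 : seq bool) : cmpT :=
  foldl (fun c p => upd c p.1 p.2) CEq (zip s1 s2).

Lemma cfold_rcons s1 s2 x y : size s1 = size s2 ->
  cfold (rcons s1 x) (rcons s2 y) = upd (cfold s1 s2) x y.
Proof. by move=> Hs; rewrite /cfold zip_rcons // -cats1 foldl_cat. Qed.

Lemma cfold_ok s1 s2 : size s1 = size s2 -> cfold s1 s2 = cmpn (bval s1) (bval s2).
Proof.
elim/last_ind: s1 s2 => [|s1 x IH] s2.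
  by case: s2.
case/lastP: s2 => [|s2 y]; first by rewrite size_rcons.
rewrite !size_rcons => /eqP; rewrite eqSS => /eqP Hs.
rewrite cfold_rcons // IH // !val_rcons -Hs.
have h1 := val_small s1; have h2 := val_small s2; rewrite -Hs in h2.
rewrite /upd; move: (2 ^ size s1) h1 h2 => P h1 h2.
case: x; case: y => /=; rewrite ?mul1n ?mul0n ?addn0.
- by rewrite /cmpn ltn_add2r eqn_add2r.
- rewrite /cmpn ifF; first (rewrite ifF //; apply/negbTE; apply/eqP; lia).
  by apply/negbTE; rewrite -leqNgt; lia.
- by rewrite /cmpn ifT //; lia.
- by [].
Qed.

Lemma enc_nat_reg n : map Some (enc_nat n) = reg (Some true) (bits n) ++ [:: Some false].
Proof.
rewrite /enc_nat map_cat; congr (_ ++ _).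
by elim: (bits n) => //= b s ->.
Qed.

Lemma Fin_haltc out A B : read_out (head None B :: behead B) = out ->
  Fin out (cfg HALT A B) 0.
Proof.
move=> H; apply: Fin_halt => //.
by rewrite /halted /= -val_eqE /= /ost inordK.
Qed.




Definition wy := enc (Inst 1 [::] 0 0).
Definition wn := enc (Inst 0 [::] 0 1).

Lemma writer_y A R : Fin wy (cfg LCHK A (Some false :: R)) 12.
Proof.
do 6 ((apply: FinRc; [discriminate | reflexivity | ]) || (apply: FinR; [discriminate | reflexivity | ])). apply: FinL; [discriminate|reflexivity|].
do 5 (apply: FinLc; [discriminate | reflexivity | ]). by apply: Fin_haltc.
Qed.

Lemma writer_n A R : Fin wn (cfg LCHK A (Some true :: R)) 12.
Proof.
do 6 ((apply: FinRc; [discriminate | reflexivity | ]) || (apply: FinR; [discriminate | reflexivity | ])). apply: FinL; [discriminate|reflexivity|].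
do 5 (apply: FinLc; [discriminate | reflexivity | ]). by apply: Fin_haltc.
Qed.

Lemma FinRc' out s A h B s' w N : s <> HALT -> dst s h = (s', w, MRight) -> 0 < N ->
  Fin out (cfg s' (rcons A w) B) N.-1 -> Fin out (cfg s A (h :: B)) N.
Proof. by move=> H1 H2 H3 H; apply: Fin_le (FinRc H1 H2 H); rewrite prednK. Qed.

Lemma FinLc' out s A x h B s' w N : s <> HALT -> dst s h = (s', w, MLeft) -> 0 < N ->
  Fin out (cfg s' A (x :: w :: B)) N.-1 -> Fin out (cfg s (rcons A x) (h :: B)) N.
Proof. by move=> H1 H2 H3 H; apply: Fin_le (FinLc H1 H2 H); rewrite prednK. Qed.

Lemma FinRun' out k c c' N : k <= N -> run k c = c' -> Fin out c' (N - k) -> Fin out c N.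
Proof. by move=> H1 H2 H; apply: Fin_le (FinRun H2 H); rewrite subnKC. Qed.

Ltac sR := apply: FinRc'; [discriminate | reflexivity | lia | ].
Ltac sL := apply: FinLc'; [discriminate | reflexivity | lia | ].

Notation un := (reg (Some true)).
Notation mk := (reg None).

Lemma read_out_map x B : read_out (map Some x ++ None :: B) = x.
Proof. by elim: x => //= b x ->. Qed.

Lemma read_out_map' x : read_out (map Some x) = x.
Proof. by elim: x => //= b x ->. Qed.

Lemma regf_mix (P U : seq bool) :
  mk P ++ un U = regf ([seq (None, x) | x <- P] ++ [seq (Some true, x) | x <- U]).
Proof. by rewrite regf_cat. Qed.

Lemma map_snd_mix (P U : seq bool) :
  [seq p.2 | p <- [seq (None : option bool, x) | x <- P] ++ [seq (Some true, x) | x <- U]] = P ++ U.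
Proof. by rewrite map_cat -!map_comp !map_id. Qed.

Section Trace.
Variables (n k l : nat) (E : seq (nat * nat)).
Definition sn := bits n.
Definition sk := bits k.
Definition rest := map Some (enc_nat l ++ enc_edges E).
Definition I0 := Inst n E k l.

Lemma encI : map Some (enc I0) = un sn ++ Some false :: un sk ++ Some false :: rest.
Proof.
change (enc I0) with (enc_nat n ++ enc_nat k ++ enc_nat l ++ enc_edges E).
rewrite (map_cat _ (enc_nat n)) (map_cat _ (enc_nat k)).
by rewrite !enc_nat_reg -/sn -/sk /rest -!catA.
Qed.

Lemma restore F P U : F <> HALT -> dst F (Some false) = (RKb, Some false, MLeft) ->
  sn = P ++ U -> P != [::] ->
  Fin (enc I0) (cfg F (None :: mk P ++ un U ++ Some false :: mk sk) (Some false :: rest))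
     (2 * size sk + 2 * size sn + 10).
Proof.
move=> HF DF Hsn HP.
have [ps [f [xl Hps]]] : exists ps f xl,
   [seq (None, x) | x <- P] ++ [seq (Some true, x) | x <- U] = rcons ps (f, xl).
  case/lastP: P HP Hsn => // P' p _ _.
  case/lastP: U => [|U' u].
    by exists [seq (None, x) | x <- P'], None, p; rewrite cats0 map_rcons.
  by exists ([seq (None, x) | x <- rcons P' p] ++ [seq (Some true, x) | x <- U']), (Some true), u;
    rewrite rcons_cat (map_rcons (fun x => (Some true, x))).
have E1 : None :: mk P ++ un U ++ Some false :: mk sk =
   rcons (None :: mk P ++ un U) (Some false) ++ regf [seq (None, x) | x <- sk].
  by rewrite -cats1 /= -!catA.
rewrite E1.
pose g (z : bool) := if z then RKf else RKamb.
have R1 := @runL RKb g (Some true) [seq (None, x) | x <- sk] ltac:(discriminate)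
   ltac:(case; discriminate) ltac:(case; reflexivity) ltac:(move=> p /mapP [z _ ->]; case: z; reflexivity)
   F (Some false) (Some false) (None :: mk P ++ un U) (Some false) rest HF DF.
apply: (FinRun' _ R1); first by rewrite size_map; lia.
rewrite -map_comp map_id.
have Hsn' : sn = rcons (map snd ps) xl by rewrite Hsn -map_snd_mix Hps map_rcons.
have Hsz : size sn = (size ps).+1 by rewrite Hsn' size_rcons size_map.
have E2 : None :: mk P ++ un U = rcons (rcons (None :: regf ps) f) (Some xl).
  by rewrite regf_mix Hps -cats1 regf_cat /= -!cats1 -!catA.
rewrite E2 ?size_map.
sL. sL.
have R2 := @runL RNb (fun _ => RNf) (Some true) ps ltac:(discriminate)
   ltac:(by []) ltac:(by []) ltac:(by [])
   RNf f (Some true) [::] None (Some xl :: Some false :: un sk ++ Some false :: rest)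
   ltac:(discriminate) ltac:(by []).
apply: (FinRun' _ R2); first by lia.
sR.
apply: (@Fin_le _ _ 0) => //; apply: Fin_haltc => /=.
have -> : reg (Some true) [seq i.2 | i <- ps] ++
       [:: Some true, Some xl, Some false & un sk ++ Some false :: rest] = map Some (enc I0).
  by rewrite encI Hsn' reg_rcons -catA.
by case: (enc I0) => //= b s; rewrite read_out_map'.
Qed.

Lemma writer_rest A : Fin (if l == 0 then wy else wn) (cfg LCHK A rest) 12.
Proof.
rewrite /rest /enc_nat.
case: eqP => [->|/eqP Hl].
  by rewrite /bits /=; apply: writer_y.
have : bits l != [::] by apply: contra Hl => /eqP H; rewrite -(bits_val l) H.
by case: (bits l) => //= b s _; apply: writer_n.
Qed.

Definition Lft i := None :: mk (take i sn).
Definition Rgt i := un (drop i sn) ++ Some false :: mk (take i sk) ++ un (drop i sk) ++ Some false :: rest.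

Lemma iter_step c i out N : i < size sn -> i < size sk ->
  Fin out (cfg (SA (upd c (nth false sn i) (nth false sk i))) (Lft i.+1) (Rgt i.+1)) N ->
  Fin out (cfg (SA c) (Lft i) (Rgt i)) (N + 4 * size sn + 4 * size sk + 30).
Proof.
move=> Hi Hk HN.
set x := nth false sn i; set y := nth false sk i; set c' := upd c x y.
have Hd : drop i sn = x :: drop i.+1 sn by rewrite (drop_nth false).
have Ht : take i.+1 sn = rcons (take i sn) x by rewrite (take_nth false).
have Hdk : drop i sk = y :: drop i.+1 sk by rewrite (drop_nth false).
have Htk : take i.+1 sk = rcons (take i sk) y by rewrite (take_nth false).
have SU : size (drop i.+1 sn) + i.+1 = size sn by rewrite size_drop; lia.
have SUk : size (drop i.+1 sk) + i.+1 = size sk by rewrite size_drop; lia.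
have SPk : size (take i sk) = i by rewrite size_take Hk.
move: HN; rewrite /Lft /Rgt Ht Htk Hd Hdk.
move: (take i sn) (drop i.+1 sn) (take i sk) (drop i.+1 sk) SU SUk SPk => P U Pk Uk SU SUk SPk HN.
rewrite reg_cons /=.
sR. sR.
have R1 := @runR (SC c x) (SC' c x) (Some true) U
  (rcons (rcons (None :: mk P) None) (Some x))
  (Some false :: mk Pk ++ [:: Some true, Some y & un Uk ++ Some false :: rest])
  ltac:(discriminate) ltac:(discriminate) ltac:(reflexivity) ltac:(reflexivity).
apply: (FinRun' _ R1); first by lia.
sR.
have R2 := @runR (SD c x) (SD' c x) None Pk
  (rcons (rcons (rcons (None :: mk P) None) (Some x) ++ un U) (Some false))
  ([:: Some true, Some y & un Uk ++ Some false :: rest])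
  ltac:(discriminate) ltac:(discriminate) ltac:(reflexivity) ltac:(reflexivity).
apply: (FinRun' _ R2); first by lia.
sR. sL.
pose g (z : bool) := if z then LKf c' else LKamb c'.
have R3 := @runL (LKb c') g None [seq (None, z) | z <- Pk] ltac:(discriminate)
   ltac:(case; discriminate) ltac:(case; reflexivity)
   ltac:(move=> p /mapP [z _ ->]; case: z; reflexivity)
   (LKf c') None None (rcons (rcons (None :: mk P) None) (Some x) ++ un U) (Some false)
   (Some y :: un Uk ++ Some false :: rest) ltac:(discriminate) ltac:(reflexivity).
apply: (FinRun' _ R3); first by rewrite size_map; lia.
rewrite -map_comp map_id.
clear R1 R2 R3; case/lastP: U SU HN => [|U' u] SU HN.
  rewrite cats0 size_map; have S0 : size (@nil bool) = 0 by []. sL. sL. sR. sR.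
  move: HN; rewrite /= reg_rcons -!cats1 ?reg_cat -!catA /= => HN.
  idtac.
  by apply: Fin_le HN; lia.
have E3 : rcons (rcons (None :: mk P) None) (Some x) ++ un (rcons U' u) =
   rcons (rcons (rcons (rcons (None :: mk P) None) (Some x) ++ un U') (Some true)) (Some u).
  by rewrite reg_rcons -!cats1 -!catA.
rewrite E3 size_map size_rcons; rewrite size_rcons in SU. sL. sL.
have R4 := @runL (LNb c') (fun _ => LNf c') (Some true) [seq (Some true, z) | z <- U']
   ltac:(discriminate) ltac:(discriminate) ltac:(reflexivity)
   ltac:(move=> p /mapP [z _ ->]; reflexivity)
   (LNf c') (Some true) (Some true) (rcons (None :: mk P) None) (Some x)
   (Some u :: Some false :: reg None Pk ++ [:: None, Some y & un Uk ++ Some false :: rest])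
   ltac:(discriminate) ltac:(reflexivity).
apply: (FinRun' _ R4); first by rewrite size_map; lia.
rewrite size_map -map_comp map_id.
sL. sR. sR.
move: HN; rewrite /= ?reg_rcons -!cats1 ?reg_cat -!catA /= => HN.
idtac.
by apply: Fin_le HN; lia.
Qed.

Definition outI := if (k <= n) && (2 <= k) then I0
  else if l == 0 then Inst 1 [::] 0 0 else Inst 0 [::] 0 1.

Lemma outI_fail : n < k -> enc outI = if l == 0 then wy else wn.
Proof. by move=> H; rewrite /outI leqNgt H /=; case: (l == 0). Qed.

Lemma outI_ok : 2 <= k -> k <= n -> outI = I0.
Proof. by move=> H1 H2; rewrite /outI H1 H2. Qed.

Lemma sn_val : bval sn = n. Proof. exact: bits_val. Qed.
Lemma sk_val : bval sk = k. Proof. exact: bits_val. Qed.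

Definition KK := 4 * size sn + 4 * size sk + 30.

Lemma exit_lt c : size sn < size sk ->
  Fin (enc outI) (cfg (SA c) (Lft (size sn)) (Rgt (size sn))) KK.
Proof.
move=> Hab.
have Hnk : n < k by rewrite -sn_val -sk_val; apply: lt_size => //; exact: bits_can.
rewrite outI_fail // /Lft /Rgt take_size drop_size /=.
have [y [U HU]] : exists y U, drop (size sn) sk = y :: U.
  by case EE: (drop (size sn) sk) => [|y U]; [move: EE => /eqP; rewrite -size_eq0 size_drop subn_eq0 leqNgt Hab | exists y, U].
have SU : size U < size sk by have := f_equal size HU; rewrite size_drop /=; lia.
have ST : size (take (size sn) sk) = size sn by rewrite size_take Hab.
rewrite HU reg_cons /KK /=.
sR.
have R1 := @runR (DX c) (DX' c) None (take (size sn) sk) (rcons (None :: mk sn) (Some false))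
  [:: Some true, Some y & un U ++ Some false :: rest]
  ltac:(discriminate) ltac:(discriminate) ltac:(reflexivity) ltac:(reflexivity).
apply: (FinRun' _ R1); first by lia.
sR. sR.
have R2 := @runR SKf SKb (Some true) U
  (rcons (rcons ((rcons (None :: mk sn) (Some false)) ++ mk (take (size sn) sk)) (Some true)) (Some y))
  (Some false :: rest)
  ltac:(discriminate) ltac:(discriminate) ltac:(reflexivity) ltac:(reflexivity).
apply: (FinRun' _ R2); first by lia.
sR.
apply: Fin_le (writer_rest _); lia.
Qed.

Lemma sk_ne : 2 <= k -> sk != [::].
Proof. by move=> Hk; apply/eqP => H; move: Hk; rewrite -sk_val H. Qed.

Lemma exit_eq : 2 <= k -> size sn = size sk ->
  Fin (enc outI) (cfg (SA (cmpn n k)) (Lft (size sn)) (Rgt (size sn))) KK.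
Proof.
move=> Hk Hab.
have Hsk := sk_ne Hk.
rewrite /Lft /Rgt take_size drop_size Hab take_size drop_size /KK /=.
sR.
have R1 := @runR (DX (cmpn n k)) (DX' (cmpn n k)) None sk (rcons (None :: mk sn) (Some false))
  (Some false :: rest)
  ltac:(discriminate) ltac:(discriminate) ltac:(reflexivity) ltac:(reflexivity).
apply: (FinRun' _ R1); first by lia.
case Hc: (cmpn n k).
- have Hnk : n < k by move: Hc; rewrite /cmpn; case: ifP => //; case: ifP.
  rewrite outI_fail //.
  sR. by apply: Fin_le (writer_rest _); lia.
- have Hnk : k <= n by move: Hc; rewrite /cmpn; case: ifP => //; case: ifP => // /eqP -> _.
  rewrite outI_ok //.
  have := @restore (DX CEq) sn [::] ltac:(discriminate) ltac:(reflexivity) ltac:(by rewrite cats0)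
    ltac:(by rewrite -size_eq0 Hab size_eq0).
  move=> /= H; rewrite -cats1 -catA /=.
  by apply: Fin_le H; lia.
- have Hnk : k <= n by move: Hc; rewrite /cmpn; case: ifP => //; case: ifP => // _; rewrite ltnNge => /negbFE.
  rewrite outI_ok //.
  have := @restore (DX CGt) sn [::] ltac:(discriminate) ltac:(reflexivity) ltac:(by rewrite cats0)
    ltac:(by rewrite -size_eq0 Hab size_eq0).
  move=> /= H; rewrite -cats1 -catA /=.
  by apply: Fin_le H; lia.
Qed.

Lemma exit_gt c : 2 <= k -> size sk < size sn ->
  Fin (enc outI) (cfg (SA c) (Lft (size sk)) (Rgt (size sk))) KK.
Proof.
move=> Hk Hab.
have Hnk : k < n by rewrite -sn_val -sk_val; apply: lt_size => //; exact: bits_can.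
rewrite outI_ok //; last by apply: ltnW.
set b := size sk.
have Hd : drop b sn = nth false sn b :: drop b.+1 sn by rewrite (drop_nth false).
have SU : size (drop b.+1 sn) + b.+1 = size sn by rewrite size_drop; lia.
rewrite /Lft /Rgt Hd /b take_size drop_size -/b /KK /=.
have := @restore (SD c (nth false sn b)) (rcons (take b sn) (nth false sn b)) (drop b.+1 sn)
  ltac:(discriminate) ltac:(reflexivity)
  ltac:(by rewrite -(take_nth false) // cat_take_drop) ltac:(by case: (take _ _)).
move: (take b sn) (nth false sn b) (drop b.+1 sn) SU => P x U SU HR.
sR. sR.
have R1 := @runR (SC c x) (SC' c x) (Some true) U (rcons (rcons (None :: mk P) None) (Some x))
  (Some false :: mk sk ++ Some false :: rest)
  ltac:(discriminate) ltac:(discriminate) ltac:(reflexivity) ltac:(reflexivity).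
apply: (FinRun' _ R1); first by lia.
sR.
have R2 := @runR (SD c x) (SD' c x) None sk
  (rcons (rcons (rcons (None :: mk P) None) (Some x) ++ un U) (Some false))
  (Some false :: rest)
  ltac:(discriminate) ltac:(discriminate) ltac:(reflexivity) ltac:(reflexivity).
apply: (FinRun' _ R2); first by lia.
move: HR; rewrite reg_rcons -!cats1 -!catA /= => HR.
by apply: Fin_le HR; lia.
Qed.

Lemma loop : 2 <= k -> forall j i c, i + j = minn (size sn) (size sk) ->
  c = cfold (take i sn) (take i sk) ->
  Fin (enc outI) (cfg (SA c) (Lft i) (Rgt i)) (j.+1 * KK).
Proof.
move=> Hk; elim=> [|j IH] i c Hi Hc.
  rewrite mul1n addn0 in Hi *.
  case: (ltngtP (size sn) (size sk)) => Hab.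
  - by move: Hi; rewrite (minn_idPl (ltnW Hab)) => ->; apply: exit_lt.
  - by move: Hi; rewrite (minn_idPr (ltnW Hab)) => ->; apply: exit_gt.
  - move: Hi; rewrite Hab minnn => Hi; subst i.
    have -> : c = cmpn n k.
      by rewrite Hc take_size -Hab take_size cfold_ok // sn_val sk_val.
    by rewrite -Hab; apply: exit_eq.
have Hia : i < size sn by move: Hi; rewrite /minn; case: ifP; lia.
have Hib : i < size sk by move: Hi; rewrite /minn; case: ifP; lia.
apply: Fin_le (iter_step Hia Hib (IH i.+1 _ _ _)); first by rewrite /KK; lia.
  by rewrite addSnnS.
rewrite Hc (take_nth false Hia) (take_nth false Hib) cfold_rcons //.
by rewrite !size_take Hia Hib.
Qed.

Lemma outI_small : k < 2 -> enc outI = if l == 0 then wy else wn.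
Proof. by move=> H; rewrite /outI (leqNgt 2 k) H andbF; case: (l == 0). Qed.

Lemma FinSTART out B N : B != [::] -> 0 < N ->
  Fin out (cfg GO [::] (None :: B)) N.-1 -> Fin out (cfg START [::] B) N.
Proof.
case: B => // h B _ HN H.
by have := @FinL0 out START (h :: B) GO h N.-1 ltac:(discriminate) erefl H; rewrite prednK.
Qed.

Definition BND := 4 * size sn + 40 + (size sk).+1 * KK.

Lemma trace : Fin (enc outI) (init Mred (enc I0)) BND.
Proof.
rewrite init_cfg encI /BND /KK.
apply: FinSTART; [by case: sn | lia |].
sR.
have R1 := @runR P0 P0b (Some true) sn [:: None] (Some false :: un sk ++ Some false :: rest)
  ltac:(discriminate) ltac:(discriminate) ltac:(reflexivity) ltac:(reflexivity).
apply: (FinRun' _ R1); first by lia.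
sR.
have Ck : can sk := bits_can k; have Vk := sk_val.
case Esk: sk Ck Vk => [|y0 [|y1 s]] Ck Vk.
- rewrite outI_small; last by rewrite -Vk.
  sR. by apply: Fin_le (writer_rest _); lia.
- have Hy : y0 = true by move: Ck.
  subst y0; rewrite outI_small; last by rewrite -Vk.
  sR. sR. sR. by apply: Fin_le (writer_rest _); lia.
- have Hk2 : 2 <= k.
    have := can_big Ck; rewrite -Vk /=; move=> /(_ isT).
    by apply: leq_trans; rewrite expnS; have := expn_gt0 2 (size s); lia.
  have Hloop := loop Hk2 (j := minn (size sn) (size sk)) (i := 0) (c := CEq) erefl ltac:(by rewrite !take0).
  have R2 := @runL RB (fun _ => RF) (Some true) [seq (Some true, z) | z <- sn] ltac:(discriminate)
     ltac:(discriminate) ltac:(reflexivity) ltac:(move=> p /mapP [z _ ->]; reflexivity)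
     RF (Some false) (Some false) [::] None
     (un (y0 :: y1 :: s) ++ Some false :: rest) ltac:(discriminate) ltac:(reflexivity).
  rewrite !reg_cons !cat_cons.
  clear Ck Vk; case: y0 Esk R2 => Esk R2.
  + sR. sR. sL. sL. sL.
    apply: (FinRun' _ R2); first by rewrite size_map; lia.
    rewrite size_map -map_comp map_id.
    sR.
    move: Hloop; rewrite /Lft /Rgt take0 drop0 /= Esk => Hloop.
    apply: Fin_le Hloop; rewrite /KK Esk /=.
    have : minn (size sn) (size s).+2 <= (size s).+2 by apply: geq_minr.
    nia.
  + sR. sL. sL.
    apply: (FinRun' _ R2); first by rewrite size_map; lia.
    rewrite size_map -map_comp map_id.
    sR.
    move: Hloop; rewrite /Lft /Rgt take0 drop0 /= Esk => Hloop.
    apply: Fin_le Hloop; rewrite /KK Esk /=.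
    have : minn (size sn) (size s).+2 <= (size s).+2 by apply: geq_minr.
    nia.
Qed.
End Trace.

Lemma card2del (T : finType) (A : {set T}) a b : a \in A -> b \in A -> a != b ->
  #|A :\ a :\ b| = #|A| - 2.
Proof.
move=> Ha Hb Hab; have A1 := cardsD1 a A; have A2 := cardsD1 b (A :\ a).
rewrite in_setD1 eq_sym Hab Hb in A2; rewrite Ha in A1; simpl in A1, A2; lia.
Qed.

Section G.
Variable I : inst.
Local Notation V := 'I_(inst_n I).
Local Notation e := (@edges_in I).

Definition ES (S : {set V}) : {set V * V} :=
  [set p : V * V | [&& (p.1 < p.2)%N, p.1 \in S, p.2 \in S & @adj I p.1 p.2]].

Lemma eE (S : {set V}) : e S = #|ES S|. Proof. by []. Qed.

Lemma e_mono (S T : {set V}) : S \subset T -> e S <= e T.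
Proof.
move=> sST; rewrite !eE; apply: subset_leq_card; apply/subsetP => p.
rewrite !inE => /and4P [H1 H2 H3 H4]; rewrite H1 H4 !(subsetP sST) //.
Qed.

Lemma e_del (S : {set V}) v : e (S :\ v) = #|[set p in ES S | (p.1 != v) && (p.2 != v)]|.
Proof.
rewrite eE; apply: eq_card => p; rewrite !inE.
by case: (p.1 == v); case: (p.2 == v); case: (p.1 < p.2)%N; case: (p.1 \in S); case: (p.2 \in S); case: adj.
Qed.

Lemma sum_del (S : {set V}) : \sum_(v in S) e (S :\ v) = e S * (#|S| - 2).
Proof.
under eq_bigr do rewrite e_del.
have -> : \sum_(v in S) #|[set p in ES S | (p.1 != v) && (p.2 != v)]| =
   \sum_(v in S) \sum_(p in ES S) ((p.1 != v) && (p.2 != v) : nat).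
  apply: eq_bigr => v _; rewrite -sum1_card big_mkcond /= [RHS]big_mkcond /=.
  by apply: eq_bigr => u _; rewrite inE; case: (u \in ES S); case: (u.1 != v); case: (u.2 != v).
rewrite exchange_big /= eE -sum1_card big_distrl /=.
apply: eq_bigr => p; rewrite inE => /and4P [H1 H2 H3 H4]; rewrite mul1n.
have -> : \sum_(v in S) ((p.1 != v) && (p.2 != v) : nat) = #|(S :\ p.1) :\ p.2|.
  rewrite -sum1_card big_mkcond /= [RHS]big_mkcond /=.
  by apply: eq_bigr => v _; rewrite !inE eq_sym [p.2 == v]eq_sym; case: (v == p.1); case: (v == p.2); case: (v \in S).
have Hne : p.2 != p.1 by rewrite neq_ltn H1 orbT.
by rewrite card2del // eq_sym.
Qed.

Lemma exists_del (S : {set V}) : 0 < #|S| -> exists2 v, v \in S & e S * (#|S| - 2) <= e (S :\ v) * #|S|.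
Proof.
move=> /card_gt0P [v0 Hv0].
pose v := [arg max_(v > v0 in S) e (S :\ v)].
exists v; first by rewrite /v; case: arg_maxnP.
rewrite -sum_del /v; case: arg_maxnP => // w Hw Hmax.
rewrite -sum1_card big_distrr /=.
by apply: leq_sum => u Hu; rewrite muln1; apply: Hmax.
Qed.

Lemma arith_shrink A B C K m : B * K <= A * ((m + 1) * m) -> m * C <= B * (m + 2) -> 0 < m ->
  C * K <= A * ((m + 2) * (m + 1)).
Proof.
move=> H1 H2 Hm.
rewrite -(leq_pmul2l Hm).
apply: (@leq_trans (B * (m + 2) * K)); first by rewrite mulnA leq_mul2r H2 orbT.
apply: (@leq_trans ((A * ((m + 1) * m)) * (m + 2))).
  by rewrite -mulnA [(m + 2) * K]mulnC mulnA leq_mul2r H1 orbT.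
have -> : A * ((m + 1) * m) * (m + 2) = m * (A * ((m + 2) * (m + 1))) by rewrite !mulnA; lia.
by [].
Qed.

Lemma shrink k : 2 <= k -> forall d (S : {set V}), #|S| = k + d ->
  exists2 T : {set V}, T \subset S & #|T| = k /\ e S * (k * (k - 1)) <= e T * (#|S| * (#|S| - 1)).
Proof.
move=> Hk; elim=> [|d IH] S HS.
  by exists S => //; split; [rewrite HS addn0 | rewrite HS addn0].
have [v Hv Hdel] := exists_del (S := S) ltac:(rewrite HS; lia).
have HS' : #|S :\ v| = k + d by have := cardsD1 v S; rewrite Hv HS /=; lia.
have [T HT [HTk HTe]] := IH _ HS'.
exists T; first by apply: subset_trans HT (subsetDl _ _).
split => //.
have Es : #|S| = (k + d - 1) + 2 by rewrite HS; lia.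
have Es' : #|S :\ v| = (k + d - 1) + 1 by rewrite HS'; lia.
move: Hdel HTe; rewrite Es Es' !addnK -/(k + d - 1).
have -> : k + d - 1 + 2 - 1 = k + d - 1 + 1 by lia.
move=> H2 H1; apply: arith_shrink H1 _ _; last by lia.
by rewrite mulnC.
Qed.

Lemma extend k : k <= inst_n I -> forall d (S : {set V}), #|S| + d = k ->
  exists2 T : {set V}, S \subset T & #|T| = k.
Proof.
move=> Hk; elim=> [|d IH] S HS.
  by exists S; rewrite // -HS addn0.
have : 0 < #|~: S| by have := cardsC S; rewrite card_ord; lia.
case/card_gt0P => x; rewrite inE => Hx.
have [T HT HTk] := IH (x |: S) ltac:(rewrite cardsU1 Hx; lia).
by exists T => //; apply: subset_trans HT; apply: subsetUr.
Qed.
End G.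

Section RealPart.
Local Open Scope ring_scope.

Section R.
Variable R : realType.
Variable I : inst.
Local Notation V := 'I_(inst_n I).
Local Notation e := (@edges_in I).

Lemma edge_eq_ge k (S : {set V}) : #|S| = k -> (e S <= edge_eq I k)%N.
Proof. by move=> H; exact: (@leq_bigmax_cond _ (fun S : {set V} => #|S| == k) (fun S => e S) S (introT eqP H)). Qed.

Lemma edge_le_ge (r : R) (S : {set V}) : (#|S|%:R <= r)%R -> (e S <= edge_le I r)%N.
Proof. by move=> H; exact: (@leq_bigmax_cond _ (fun S : {set V} => (#|S|%:R <= r)%R) (fun S => e S) S H). Qed.

Lemma edge_le_bnd (r B : R) : (0 <= B)%R ->
  (forall S : {set V}, (#|S|%:R <= r)%R -> ((e S)%:R <= B)%R) -> ((edge_le I r)%:R <= B)%R.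
Proof.
move=> HB H; rewrite /edge_le.
apply: (big_ind (fun x : nat => (x%:R <= B)%R)) => //.
by move=> x y Hx Hy; rewrite /maxn; case: ifP.
Qed.

Lemma key (gam : R) : (1 <= gam)%R -> (2 <= inst_k I)%N -> (inst_k I <= inst_n I)%N ->
  ((edge_le I (gam * (inst_k I)%:R))%:R <= 2 * gam ^+ 2 * (edge_eq I (inst_k I))%:R)%R.
Proof.
set k := inst_k I; set Ee := edge_eq I k => Hg Hk Hkn.
have HB : (0 <= 2 * gam ^+ 2 * Ee%:R :> R)%R.
  by apply: mulr_ge0; [apply: mulr_ge0; [lra | apply: exprn_ge0; lra] | apply: ler0n].
apply: edge_le_bnd => // S HS.
case: (leqP #|S| k) => Hs.
  have [T HST HT] := extend Hkn (d := k - #|S|) (S := S) ltac:(lia).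
  have H1 : (e S <= Ee)%N by apply: leq_trans (e_mono HST) (edge_eq_ge HT).
  apply: (@le_trans _ _ (Ee%:R)); first by rewrite ler_nat.
  have : (1 <= gam ^+ 2)%R by rewrite expr2; nra.
  have : (0 <= Ee%:R :> R)%R by apply: ler0n.
  nra.
have [T HTS [HT HTe]] := shrink Hk (d := #|S| - k) (S := S) ltac:(lia).
have H1 : (e T <= Ee)%N by apply: (edge_eq_ge HT).
have H2 : (e S * (k * (k - 1)) <= Ee * (#|S| * (#|S| - 1)))%N.
  apply: leq_trans HTe _; by rewrite leq_mul2r H1 orbT.
move: H2; rewrite -(ler_nat R) !natrM !natrB; [|lia|lia].
move: HS; set s := (#|S|%:R : R); set c := (k%:R : R); set x := ((e S)%:R : R); set y := (Ee%:R : R).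
move=> HS H2.
have Hc : (2 <= c)%R by rewrite /c (ler_nat R 2 k).
have Hs1 : (c + 1 <= s)%R by rewrite /s /c natr1 ler_nat.
have Hx : (0 <= x)%R by apply: ler0n.
have Hy : (0 <= y)%R by apply: ler0n.
have E1 : (s * (s - 1) <= 2 * gam ^+ 2 * (c * (c - 1)))%R.
  have A1 : (s * (s - 1) <= gam * c * (gam * c - 1))%R by nra.
  apply: le_trans A1 _; rewrite expr2.
  have : (0 <= gam * c * (gam * (c - 2) + 1))%R by apply: mulr_ge0; nra.
  nra.
have Kp : (0 < c * (c - 1))%R by nra.
have : (x * (c * (c - 1)) <= 2 * gam ^+ 2 * y * (c * (c - 1)))%R.
  apply: le_trans H2 _.
  have : (0 <= y * (2 * gam ^+ 2 * (c * (c - 1)) - s * (s - 1)))%R by apply: mulr_ge0; lra.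
  nra.
by rewrite ler_pM2r.
Qed.
End R.

End RealPart.
Unset Implicit Arguments.
Local Open Scope ring_scope.

Lemma edge_eq0 (I : inst) : ~~ ((inst_k I <= inst_n I)%N && (2 <= inst_k I)%N) ->
  edge_eq I (inst_k I) = 0%N.
Proof.
move=> H; rewrite /edge_eq; apply: big1 => S /eqP HS.
case/nandP: H => H.
  by move: (max_card S); rewrite card_ord HS; lia.
apply/eqP; rewrite eE cards_eq0; apply/eqP/setP => p; rewrite !inE.
apply/negP => /and4P [H1 H2 H3 _].
have : (#|[set p.1; p.2]| <= #|S|)%N.
  by apply: subset_leq_card; apply/subsetP => z; rewrite !inE => /orP [] /eqP ->.
rewrite cards2 HS; move: H1 H; case: eqP => [->|_]; first by rewrite ltnn.
by move=> _ /negP H4 H5; apply: H4.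
Qed.

Lemma edge_le_empty (R : realType) (r : R) : edge_le (Inst 0 [::] 0 1) r = 0%N.
Proof.
rewrite /edge_le; apply: big1 => S _.
by apply/eqP; rewrite -leqn0; apply: leq_trans (max_card _) _; rewrite card_prod card_ord.
Qed.

Lemma gap_ok (R : realType) (lam gam : R) (I : inst) : 1 <= lam -> 1 <= gam ->
  (2 <= inst_k I)%N -> (inst_k I <= inst_n I)%N ->
  (gap1_yes I -> gap2_yes R I) /\ (gap1_no (2 * lam * gam ^+ 2) I -> gap2_no lam gam I).
Proof.
move=> Hl Hg Hk Hkn; split.
  rewrite /gap1_yes /gap2_yes => H; apply: leq_trans H _.
  rewrite /edge_eq; apply/bigmax_leqP => S /eqP HS.
  by apply: edge_le_ge; rewrite HS.
rewrite /gap1_no /gap2_no => H.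
have K := key Hg Hk Hkn.
set x := (edge_le I (gam * (inst_k I)%:R))%:R in K *.
set y := (edge_eq I (inst_k I))%:R in K H.
set L := (inst_l I)%:R in H *.
have Hg2 : 0 < gam ^+ 2 by rewrite expr2; nra.
have Hd : 0 < 2 * lam * gam ^+ 2 by nra.
move: H; rewrite ltr_pdivlMr // => H.
rewrite ltr_pdivlMr; last by lra.
apply: le_lt_trans (_ : 2 * gam ^+ 2 * y * lam < L); last by have -> : 2 * gam ^+ 2 * y * lam = y * (2 * lam * gam ^+ 2) by ring.

by rewrite ler_pM2r //; lra.
Qed.

Lemma size_enc_ge n k l E :
  (2 * size (sn n) + 2 * size (sk k) + 2 <= size (enc (Inst n E k l)))%N.
Proof.
have := f_equal size (encI n k l E); rewrite size_map => ->.
by rewrite size_cat /= size_cat /= !size_reg; lia.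
Qed.

Theorem proposition1 (R : realType) (lam gam : R) :
  1 <= lam -> 1 <= gam ->
  poly_fpt_reduction
    gap1_yes (gap1_no (2 * lam * gam ^+ 2))
    (@gap2_yes R) (gap2_no lam gam).
Proof.
move=> Hl Hg; exists Mred, 100%N, id => I.
case: I => n E k l.
have [t [Ht [Hh Ho]]] := trace n k l E.
exists t; split.
  apply: leq_trans Ht _; rewrite /BND /KK.
  have HS := size_enc_ge n k l E.
  move: (size (enc _)) HS => S HS.
  have HS1 : (1 <= S)%N by lia.
  have HS2 : (S * S <= S ^ 100)%N.
    by rewrite mulnn leq_pexp2l.
  nia.
split; first by [].
exists (outI n k l E); split; first exact: Ho.
rewrite /outI; case Hc: ((k <= n)%N && (2 <= k)%N).
  case/andP: Hc => Hkn Hk; split; first by [].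
  exact: (@gap_ok R lam gam (Inst n E k l) Hl Hg Hk Hkn).
have H0 := @edge_eq0 (Inst n E k l) ltac:(by rewrite /= Hc).
case: eqP => [Hl0|/eqP Hl0].
  split; first by [].
  split; first by [].
  move=> H; exfalso; move: H; rewrite /gap1_no /= H0 Hl0 mul0r ltxx.
  by [].
split; first by [].
split.
  by rewrite /gap1_yes /= H0 leqn0 => /eqP H; move: Hl0; rewrite H.
move=> _; rewrite /gap2_no /= edge_le_empty mul1r.
by rewrite invr_gt0; lra.
Qed.
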